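(* Let $p\ge1$ and $m\ge0$ be integers, $\nu\in[0,1/2]$, and $\delta_{p,\nu}=1+\nu/p^2$. Then $$\|T_p^{(m)}\|_{L^\infty(-\delta_{p,\nu},\delta_{p,\nu})}\le\frac{p^{2m}e^{\nu}}{\prod_{\ell=0}^{m-1}(2\ell+1)}.$$ For $x=1+\varepsilon\in[1,\delta_{p,\nu}]$ and $p\ge m+1$, $$T_p^{(m)}(x)\ge\Big(1+\frac{p^2-m^2}{2m+1}\varepsilon\Big)\prod_{\ell=0}^{m-1}\frac{p^2-\ell^2}{2\ell+1}.$$ Moreover $T_p(\delta_{p,\nu})\ge1+\nu$.
   Context: $T_p$ denotes the Chebyshev polynomial of the first kind of degree $p$ ($T_p(\cos\theta)=\cos(p\theta)$), and $T_p^{(m)}$ its $m$-th derivative; empty products equal $1$. *)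

(* Defs.v *)
From HB Require Import structures.
From mathcomp Require Import all_boot all_order all_algebra.
From mathcomp Require Import all_classical all_reals all_analysis.
Set Implicit Arguments. Unset Strict Implicit. Unset Printing Implicit Defensive.
Import Order.TTheory GRing.Theory Num.Theory.
Local Open Scope ring_scope.

(* Chebyshev polynomials of the first kind, via the three-term recurrence
   T_0 = 1, T_1 = X, T_{n+2} = 2 X T_{n+1} - T_n  (so T_n(cos t) = cos(n t)). *)
Fixpoint cheb_pair (R : nzRingType) (n : nat) : {poly R} * {poly R} :=
  match n with
  | 0%N => (1, 'X)
  | n'.+1 => let pr := cheb_pair R n' in (pr.2, 2%:R *: 'X * pr.2 - pr.1)
  end.

Definition chebT (R : nzRingType) (n : nat) : {poly R} := (cheb_pair R n).1.

(* Main.v *)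
Require Import Defs.
From HB Require Import structures.
From mathcomp Require Import all_boot all_order all_algebra.
From mathcomp Require Import all_classical all_reals all_analysis.
From mathcomp Require Import ring lra zify.
Import Order.TTheory GRing.Theory Num.Theory.
Local Open Scope ring_scope.

Lemma ind2 (P : nat -> Prop) : P 0%N -> P 1%N ->
  (forall n, P n -> P n.+1 -> P n.+2) -> forall n, P n.
Proof.
move=> P0 P1 H n; suff: P n /\ P n.+1 by case.
by elim: n => [|n [A B]]; split => //; apply: H.
Qed.

Lemma chebT0 (R : realType) : chebT R 0 = 1. Proof. by []. Qed.
Lemma chebT1 (R : realType) : chebT R 1 = 'X. Proof. by []. Qed.
Lemma chebTSS (R : realType) n :
  chebT R n.+2 = 2%:P * 'X * chebT R n.+1 - chebT R n.
Proof. by rewrite /chebT /= mul_polyC. Qed.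

Fixpoint chebU_pair (R : realType) (n : nat) : {poly R} * {poly R} :=
  match n with
  | 0%N => (1, 2%:P * 'X)
  | n'.+1 => let pr := chebU_pair R n' in (pr.2, 2%:P * 'X * pr.2 - pr.1)
  end.
Definition chebU (R : realType) n := (chebU_pair R n).1.
Lemma chebU0 (R : realType) : chebU R 0 = 1. Proof. by []. Qed.
Lemma chebU1 (R : realType) : chebU R 1 = 2%:P * 'X. Proof. by []. Qed.
Lemma chebUSS (R : realType) n :
  chebU R n.+2 = 2%:P * 'X * chebU R n.+1 - chebU R n.
Proof. by []. Qed.

Lemma rec_zero (R : realType) (S : nat -> {poly R}) :
  S 0%N = 0 -> S 1%N = 0 -> (forall n, S n.+2 = 2%:P * 'X * S n.+1 - S n) ->
  forall n, S n = 0.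
Proof.
move=> S0 S1 H; apply: ind2 => // n A B; by rewrite H A B; ring.
Qed.

Lemma polyC2 (R : realType) : (2%:P : {poly R}) = 2%:R.
Proof. by rewrite polyC_natr. Qed.

Lemma TXU (R : realType) n : chebT R n.+2 = 'X * chebU R n.+1 - chebU R n.
Proof.
apply/eqP; rewrite -subr_eq0; apply/eqP.
apply: (@rec_zero R (fun n => chebT R n.+2 - ('X * chebU R n.+1 - chebU R n))).
- rewrite !chebTSS chebT1 chebT0 chebU1 chebU0 polyC2; ring.
- rewrite !chebTSS !chebUSS chebT1 chebT0 chebU1 chebU0 polyC2; ring.
- move=> k; rewrite [chebT R k.+4]chebTSS [chebU R k.+3]chebUSS [chebU R k.+2]chebUSS; ring.
Qed.

Lemma UTU (R : realType) n : chebU R n.+2 = 2%:P * chebT R n.+2 + chebU R n.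
Proof.
apply/eqP; rewrite -subr_eq0; apply/eqP.
apply: (@rec_zero R (fun n => chebU R n.+2 - (2%:P * chebT R n.+2 + chebU R n))).
- rewrite !chebTSS !chebUSS chebT1 chebT0 chebU1 chebU0 polyC2; ring.
- rewrite !chebTSS !chebUSS chebT1 chebT0 chebU1 chebU0 polyC2; ring.
- move=> k; rewrite [chebU R k.+4]chebUSS [chebT R k.+4]chebTSS [chebU R k.+2]chebUSS; ring.
Qed.

Lemma deriv2X (R : realType) (q : {poly R}) :
  (2%:P * 'X * q)^`() = 2%:P * q + 2%:P * 'X * q^`().
Proof. by rewrite derivM derivM derivC derivX mul0r add0r mulr1. Qed.

Lemma deriv1 (R : realType) : (1 : {poly R})^`() = 0.
Proof. by rewrite -polyC1 derivC. Qed.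

Lemma derivT (R : realType) n : (chebT R n.+1)^`() = chebU R n *+ n.+1.
Proof.
elim/ind2: n => [||n A B].
- by rewrite chebT1 derivX chebU0.
- rewrite chebTSS derivB deriv2X chebT1 chebU1 derivX chebT0 deriv1; ring.
- rewrite chebTSS derivB deriv2X B A TXU chebUSS; ring.
Qed.

Lemma HT (R : realType) n :
  (1 - 'X * 'X) * (chebT R n)^`() = ('X * chebT R n - chebT R n.+1) *+ n.
Proof.
elim/ind2: n => [||n A B].
- by rewrite chebT0 deriv1 mulr0 mulr0n.
- rewrite chebT1 derivX chebTSS chebT1 chebT0 polyC2; ring.
- rewrite [chebT R n.+3]chebTSS.
  have dT2 : (chebT R n.+2)^`() =
     2%:P * chebT R n.+1 + 2%:P * 'X * (chebT R n.+1)^`() - (chebT R n)^`().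
    by rewrite chebTSS derivB deriv2X.
  rewrite dT2.
  transitivity (2%:P * (1 - 'X * 'X) * chebT R n.+1 +
     2%:P * 'X * ((1 - 'X * 'X) * (chebT R n.+1)^`()) -
     (1 - 'X * 'X) * (chebT R n)^`()); first ring.
  rewrite A B chebTSS polyC2; ring.
Qed.

Lemma onemXX_neq0 (R : realType) : (1 - 'X * 'X : {poly R}) != 0.
Proof.
apply/eqP => /(congr1 (horner^~ 0)) /eqP; rewrite !hornerE.
by rewrite subr0 oner_eq0.
Qed.

Lemma odeT (R : realType) n :
  (1 - 'X * 'X) * (chebT R n)^`()^`() - 'X * (chebT R n)^`()
     + chebT R n *+ (n * n) = 0.
Proof.
have Hd := congr1 deriv (HT R n).
rewrite derivM derivB deriv1 derivM derivX mul1r mulr1 derivMn derivB derivM derivX mul1r in Hd.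
have key : (1 - 'X * 'X) * ((1 - 'X * 'X) * (chebT R n)^`()^`() - 'X * (chebT R n)^`()
     + chebT R n *+ (n * n)) = 0.
  transitivity ((1 - 'X * 'X) * ((0 - ('X + 'X)) * (chebT R n)^`() +
      (1 - 'X * 'X) * (chebT R n)^`()^`()) + 'X * ((1 - 'X * 'X) * (chebT R n)^`())
      + (1 - 'X * 'X) * chebT R n *+ (n * n)); first ring.
  rewrite Hd.
  transitivity (((1 - 'X * 'X) * chebT R n + 'X * ((1 - 'X * 'X) * (chebT R n)^`())
     - (1 - 'X * 'X) * (chebT R n.+1)^`()) *+ n + 'X * ((1 - 'X * 'X) * (chebT R n)^`())
      + (1 - 'X * 'X) * chebT R n *+ (n * n)); first ring.
  rewrite HT HT chebTSS polyC2; ring.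
by move/eqP: key; rewrite mulf_eq0 (negbTE (onemXX_neq0 R)) /= => /eqP.
Qed.

Definition ode_expr (R : realType) n k : {poly R} :=
  (1 - 'X * 'X) * (chebT R n)^`(k.+2) - ('X * (chebT R n)^`(k.+1)) *+ (2 * k + 1)
   + (chebT R n)^`(k) *+ (n * n) - (chebT R n)^`(k) *+ (k * k).

Lemma odeK (R : realType) n k : ode_expr R n k = 0.
Proof.
elim: k => [|k IH].
  apply: etrans (odeT R n); rewrite /ode_expr !derivnS derivn0; ring.
transitivity (ode_expr R n k)^`(); last by rewrite IH deriv0.
rewrite /ode_expr !(derivD, derivB, derivN, derivMNn, derivM, derivMn, deriv1, derivX) -!derivnS; ring.
Qed.

Definition aT (R : realType) p k := ((chebT R p)^`(k)).[1].

Lemma aT_rec (R : realType) p k :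
  aT R p k.+1 = (p%:R ^+ 2 - k%:R ^+ 2) / (2 * k + 1)%:R * aT R p k.
Proof.
have H := congr1 (horner^~ 1) (odeK R p k).
rewrite /ode_expr !(hornerMn, hornerM, hornerE) in H.
have nz : ((2 * k + 1)%:R : R) != 0 by rewrite pnatr_eq0 addn1.
have e : aT R p k.+1 * (2 * k + 1)%:R = (p%:R ^+ 2 - k%:R ^+ 2) * aT R p k.
  apply/eqP; rewrite eq_sym -subr_eq0; apply/eqP; apply: (etrans _ H); rewrite /aT; ring.
by rewrite mulrAC -e mulfK.
Qed.

Lemma hornerTSS (R : realType) n (x : R) :
  (chebT R n.+2).[x] = 2 * x * (chebT R n.+1).[x] - (chebT R n).[x].
Proof. by rewrite chebTSS !hornerE. Qed.

Lemma chebT_at1 (R : realType) n : (chebT R n).[1] = 1.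
Proof.
elim/ind2: n => [||n A B]; first by rewrite chebT0 hornerE.
  by rewrite chebT1 hornerX.
rewrite hornerTSS A B; ring.
Qed.

Lemma chebT_cos (R : realType) n (t : R) : (chebT R n).[cos t] = cos (n%:R * t).
Proof.
elim/ind2: n => [||n A B]; first by rewrite chebT0 hornerE mul0r cos0.
  by rewrite chebT1 hornerX mul1r.
rewrite hornerTSS A B.
have e1 : (n.+2)%:R * t = (n.+1)%:R * t + t by ring.
have e2 : (n%:R) * t = (n.+1)%:R * t - t by ring.
rewrite e1 e2 cosB cosD; ring.
Qed.

Lemma chebT_in (R : realType) n (x : R) : `|x| <= 1 -> `|(chebT R n).[x]| <= 1.
Proof.
move=> hx; have hx' : x \in `[(-1), 1].
  by rewrite in_itv /=; rewrite ler_norml in hx.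
rewrite -(acosK hx') chebT_cos ler_norml cos_le1 cos_geN1 //.
Qed.

Lemma chebT_opp (R : realType) n (x : R) :
  (chebT R n).[- x] = (-1) ^+ n * (chebT R n).[x].
Proof.
elim/ind2: n => [||n A B]; first by rewrite chebT0 !hornerE; ring.
  by rewrite chebT1 !hornerX expr1 mulN1r.
rewrite !hornerTSS A B !exprS; ring.
Qed.

Lemma chebT_ge1 (R : realType) (x : R) n : 1 <= x ->
  1 <= (chebT R n).[x] <= (chebT R n.+1).[x].
Proof.
move=> x1; elim: n => [|n /andP [A B]].
  by rewrite chebT0 chebT1 hornerX !hornerE lexx.
rewrite hornerTSS; apply/andP; split; first exact: le_trans B.
nra.
Qed.

Lemma chebT_out (R : realType) n (x : R) : 1 <= `|x| ->
  `|(chebT R n).[x]| <= (chebT R n).[`|x|].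
Proof.
move=> hx; have := @chebT_ge1 R `|x| n hx => /andP [h1 _].
have [x0|x0] := leP 0 x.
  rewrite (ger0_norm x0) in h1 *; rewrite ger0_norm //; exact: le_trans ler01 h1.
rewrite (ltr0_norm x0) in h1 *.
have -> : x = - - x by rewrite opprK.
rewrite chebT_opp normrM normrX normrN1 expr1n mul1r opprK ger0_norm //.
exact: le_trans ler01 h1.
Qed.

Inductive cone (R : realType) : {poly R} -> Prop :=
 | cone0 : cone R 0
 | coneS q c j : cone R q -> 0 <= c -> cone R (q + c *: chebT R j).
Arguments cone {R} _.
Arguments cone0 {R}.
Arguments coneS {R} q c j.

Lemma cone_add (R : realType) (q1 q2 : {poly R}) : cone q1 -> cone q2 -> cone (q1 + q2).
Proof.
move=> h1; elim=> [|q c j _ IH c0]; first by rewrite addr0.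
by rewrite addrA; apply: coneS.
Qed.

Lemma cone_scale (R : realType) (c : R) q : 0 <= c -> cone q -> cone (c *: q).
Proof.
move=> c0; elim=> [|r d j _ IH d0]; first by rewrite scaler0; apply: cone0.
by rewrite scalerDr scalerA; apply: coneS => //; apply: mulr_ge0.
Qed.

Lemma cone_T (R : realType) (c : R) j : 0 <= c -> cone (c *: chebT R j).
Proof. by move=> c0; rewrite -[X in cone X]add0r; apply: coneS => //; apply: cone0. Qed.

Lemma cone_U (R : realType) n : cone (chebU R n).
Proof.
elim/ind2: n => [||n A B].
- by have := @cone_T R 1 0 ler01; rewrite scale1r.
- rewrite chebU1 mul_polyC; exact: (@cone_T R 2 1).
- by rewrite UTU mul_polyC addrC; apply: cone_add => //; apply: cone_T.
Qed.

Lemma cone_deriv (R : realType) (q : {poly R}) : cone q -> cone q^`().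
Proof.
elim=> [|r c j _ IH c0]; first by rewrite deriv0; apply: cone0.
rewrite derivD derivZ; apply: cone_add => //.
case: j => [|i]; first by rewrite chebT0 deriv1 scaler0 -(addr0 0); apply: cone_add; apply: cone0.
rewrite derivT -scaler_nat scalerA; apply: cone_scale; last exact: cone_U.
by apply: mulr_ge0.
Qed.

Lemma cone_derivn (R : realType) p k : cone ((chebT R p)^`(k)).
Proof.
elim: k => [|k IH]; last by rewrite derivnS; apply: cone_deriv.
by rewrite derivn0; have := @cone_T R 1 p ler01; rewrite scale1r.
Qed.

Lemma cone_eval (R : realType) (q : {poly R}) (x y : R) : cone q ->
  (forall j, `|(chebT R j).[x]| <= (chebT R j).[y]) -> `|q.[x]| <= q.[y].
Proof.
move=> hq hT; elim: hq => [|r c j _ IH c0]; first by rewrite !horner0 normr0.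
rewrite !hornerD !hornerZ (le_trans (ler_normD _ _)) // lerD // normrM (ger0_norm c0).
by rewrite ler_wpM2l.
Qed.

Lemma aT_ge0 (R : realType) p k : 0 <= aT R p k.
Proof.
rewrite /aT; apply: le_trans (normr_ge0 ((chebT R p)^`(k)).[1]) _.
by apply: (@cone_eval R _ 1 1 (cone_derivn R p k)) => j; rewrite chebT_at1 normr1.
Qed.

Lemma aT0 (R : realType) p : aT R p 0 = 1.
Proof. by rewrite /aT derivn0 chebT_at1. Qed.

Lemma aT_prod (R : realType) p m :
  aT R p m = \prod_(l < m) ((p%:R ^+ 2 - l%:R ^+ 2) / (2 * l + 1)%:R).
Proof.
elim: m => [|m IH]; first by rewrite big_ord0 aT0.
by rewrite big_ord_recr /= aT_rec IH mulrC.
Qed.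

Lemma dpos (R : realType) k : (0 : R) < (2 * k + 1)%:R.
Proof. by rewrite ltr0n addn1. Qed.

Lemma aT_step (R : realType) p k :
  aT R p k.+1 <= p%:R ^+ 2 / (2 * k + 1)%:R * aT R p k.
Proof.
rewrite aT_rec ler_wpM2r ?aT_ge0 //.
have d0 : (0:R) <= (2*k+1)%:R^-1 by rewrite invr_ge0 ltW // dpos.
by rewrite ler_wpM2r // gerBl exprn_ge0.
Qed.

Lemma aT_step' (R : realType) p k : aT R p k.+1 <= p%:R ^+ 2 * aT R p k.
Proof.
apply: le_trans (aT_step R p k) _; rewrite ler_wpM2r ?aT_ge0 //.
rewrite -[leRHS]mulr1 ler_wpM2l ?exprn_ge0 // invf_le1 ?dpos //.
by rewrite ler1n addn1.
Qed.

Lemma prod_pos (R : realType) m : (0 : R) < \prod_(l < m) (2 * l + 1)%:R.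
Proof. by apply: prodr_gt0 => l _; apply: dpos. Qed.

Lemma aT_le (R : realType) p m :
  aT R p m <= p%:R ^+ (2 * m) / \prod_(l < m) (2 * l + 1)%:R.
Proof.
elim: m => [|m IH]; first by rewrite big_ord0 aT0 expr0 divr1.
apply: le_trans (aT_step R p m) _.
apply: le_trans (ler_wpM2l _ IH) _.
  by rewrite divr_ge0 ?exprn_ge0 // ltW // dpos.
rewrite big_ord_recr /= mulnS exprD.
have h1 := dpos R m; have h2 := prod_pos R m.
rewrite le_eqVlt; apply/orP; left; apply/eqP; field.
by rewrite !gt_eqF.
Qed.

Lemma aT_shift (R : realType) p m i : aT R p (m + i) <= aT R p m * (p%:R ^+ 2) ^+ i.
Proof.
elim: i => [|i IH]; first by rewrite addn0 expr0 mulr1.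
rewrite addnS; apply: le_trans (aT_step' R p _) _.
by rewrite [(p%:R ^+ 2) ^+ i.+1]exprS mulrCA ler_wpM2l ?exprn_ge0.
Qed.

Lemma exp_partial (R : realType) (x : R) n : 0 <= x ->
  \sum_(k < n) x ^+ k / k`!%:R <= expR x.
Proof.
move=> x0; rewrite /expR.
have := @nondecreasing_cvgn_le R (series (exp_coeff x)) _ (is_cvg_series_exp_coeff x) n.
rewrite /series /= big_mkord; apply.
apply: (@nondecreasing_series R (exp_coeff x) xpredT 0) => k _ _.
by rewrite /exp_coeff /= divr_ge0 // exprn_ge0.
Qed.

Lemma derivn_comp (R : realType) (q : {poly R}) m i : q^`(m)^`(i) = q^`(m + i).
Proof.
elim: i => [|i IH]; first by rewrite derivn0 addn0.
by rewrite derivnS IH -derivnS addnS.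
Qed.

Lemma fact_neq0 (R : realType) i : (i`!%:R : R) != 0.
Proof. by rewrite pnatr_eq0 -lt0n fact_gt0. Qed.

Lemma taylorT (R : realType) p m (eps : R) N :
  (size ((chebT R p)^`(m)) <= N)%N ->
  ((chebT R p)^`(m)).[1 + eps] = \sum_(i < N) aT R p (m + i) / i`!%:R * eps ^+ i.
Proof.
move=> hN; rewrite (nderiv_taylor_wide _ hN); last by rewrite /GRing.comm mulrC.
apply: eq_bigr => i _; congr (_ * _).
rewrite /aT -derivn_comp [(chebT R p)^`(m)^`(i)]nderivn_def hornerMn -mulr_natr mulfK // fact_neq0.
Qed.

Lemma taylor_lower (R : realType) p m (eps : R) : 0 <= eps ->
  aT R p m + aT R p m.+1 * eps <= ((chebT R p)^`(m)).[1 + eps].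
Proof.
move=> e0; rewrite (@taylorT R p m eps (size ((chebT R p)^`(m))).+2); last by rewrite !leqW.
rewrite big_ord_recl big_ord_recl /= addrA addn0 addn1 !expr0 expr1 !mulr1 divr1.
rewrite /bump /= divr1 -[leLHS]addr0 lerD2l sumr_ge0 // => i _.
by rewrite mulr_ge0 ?exprn_ge0 // divr_ge0 ?aT_ge0.
Qed.

Lemma taylor_upper (R : realType) p m (eps : R) : 0 <= eps ->
  ((chebT R p)^`(m)).[1 + eps] <= aT R p m * expR (p%:R ^+ 2 * eps).
Proof.
move=> e0; rewrite (@taylorT R p m eps (size ((chebT R p)^`(m)))) //.
apply: le_trans (_ : \sum_(i < size ((chebT R p)^`(m)))
   aT R p m * ((p%:R ^+ 2 * eps) ^+ i / i`!%:R) <= _).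
  apply: ler_sum => i _.
  rewrite (_ : aT R p m * ((p%:R ^+ 2 * eps) ^+ i / i`!%:R) =
     aT R p m * (p%:R^+2)^+i / i`!%:R * eps^+i); last by rewrite exprMn; ring.
  by rewrite ler_wpM2r ?exprn_ge0 // ler_wpM2r ?invr_ge0 // aT_shift.
rewrite -big_distrr /= ler_wpM2l ?aT_ge0 // exp_partial //.
by rewrite mulr_ge0 ?exprn_ge0.
Qed.
Lemma part2 (R : realType) p m (eps : R) : 0 <= eps ->
  (1 + (p%:R ^+ 2 - m%:R ^+ 2) / (2 * m + 1)%:R * eps) *
       \prod_(l < m) ((p%:R ^+ 2 - l%:R ^+ 2) / (2 * l + 1)%:R)
     <= ((chebT R p)^`(m)).[1 + eps].
Proof.
move=> e0; apply: le_trans (@taylor_lower R p m eps e0).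
rewrite -aT_prod aT_rec le_eqVlt; apply/orP; left; apply/eqP; ring.
Qed.

Lemma part1 (R : realType) p m (nu x : R) : (1 <= p)%N -> 0 <= nu ->
  - (1 + nu / (p%:R ^+ 2)) < x < 1 + nu / (p%:R ^+ 2) ->
  `|((chebT R p)^`(m)).[x]| <=
       p%:R ^+ (2 * m) * expR nu / \prod_(l < m) (2 * l + 1)%:R.
Proof.
move=> hp nu0 hx.
have p2pos : (0:R) < p%:R ^+ 2 by rewrite exprn_gt0 // ltr0n.
have key : exists eps : R, [/\ 0 <= eps, eps <= nu / p%:R ^+ 2 &
    `|((chebT R p)^`(m)).[x]| <= ((chebT R p)^`(m)).[1 + eps]].
  case: (leP `|x| 1) => hx1.
    exists 0; split => //; first by rewrite divr_ge0 // ltW.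
    rewrite addr0; apply: (@cone_eval R _ x 1 (cone_derivn R p m)) => j.
    by rewrite chebT_at1; apply: chebT_in.
  exists (`|x| - 1); split.
  - by rewrite subr_ge0 ltW.
  - by rewrite lerBlDl ltW // ltr_norml.
  - rewrite addrC subrK; apply: (@cone_eval R _ x `|x| (cone_derivn R p m)) => j.
    by apply: chebT_out; rewrite ltW.
case: key => eps [e0 e1 h]; apply: le_trans h _.
apply: le_trans (@taylor_upper R p m eps e0) _.
rewrite [leRHS]mulrAC; apply: ler_pM; rewrite ?aT_ge0 ?expR_ge0 ?aT_le //.
rewrite ler_expR; have := ler_wpM2l (ltW p2pos) e1.
by rewrite mulrCA mulfV ?mulr1 // gt_eqF.
Qed.

Theorem lemmaA1 (R : realType) (p m : nat) (nu : R) :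
  (1 <= p)%N -> 0 <= nu <= 1 / 2 ->
  let delta : R := 1 + nu / (p%:R ^+ 2) in
  (* L^infty bound on (-delta, delta) *)
  (forall x : R, - delta < x < delta ->
     `|((chebT R p)^`(m)).[x]| <=
       p%:R ^+ (2 * m) * expR nu / \prod_(l < m) (2 * l + 1)%:R) /\
  (* lower bound at x = 1 + eps in [1, delta], for p >= m+1 *)
  (forall eps : R, 0 <= eps -> 1 + eps <= delta -> (m + 1 <= p)%N ->
     (1 + (p%:R ^+ 2 - m%:R ^+ 2) / (2 * m + 1)%:R * eps) *
       \prod_(l < m) ((p%:R ^+ 2 - l%:R ^+ 2) / (2 * l + 1)%:R)
     <= ((chebT R p)^`(m)).[1 + eps]) /\
  1 + nu <= (chebT R p).[delta].
Proof.
move=> hp /andP [nu0 nu1] delta.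
have p2pos : (0:R) < p%:R ^+ 2 by rewrite exprn_gt0 // ltr0n.
split; [|split].
- by move=> x hx; apply: part1.
- by move=> eps e0 _ _; apply: part2.
have := @part2 R p 0 (nu / p%:R ^+ 2) (divr_ge0 nu0 (ltW p2pos)).
rewrite big_ord0 mulr1 derivn0 => H; apply: le_trans _ H.
rewrite le_eqVlt; apply/orP; left; apply/eqP; field.
by rewrite pnatr_eq0 -lt0n.
Qed.
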